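(* For all $n\ge0$, \[ c_n^2=c_n+2\sum_{k=0}^{n-3}\sum_{r=3}^{n-k}p_{r-1}c_k c_{n-k-r}^2 . \]
   Context: The Narayana's cows numbers $c_n$ are defined by $c_n=\delta_{n,0}+c_{n-1}+c_{n-3}$ for $n\ge0$, $c_n=0$ for $n<0$. The Padovan numbers $p_n$ are defined by $p_n=\delta_{n,0}+p_{n-2}+p_{n-3}$ for $n\ge0$, $p_n=0$ for $n<0$. $\delta_{i,j}$ is $1$ if $i=j$ and $0$ otherwise. Empty sums are $0$. *)

(* Defs.v *)
From mathcomp Require Import all_boot.
Set Implicit Arguments. Unset Strict Implicit. Unset Printing Implicit Defensive.

(* Narayana's cows numbers: c_n = [n=0] + c_{n-1} + c_{n-3}, c_n = 0 for n<0.
   Unfolded: c_0 = 1, c_1 = c_0 = 1, c_2 = c_1 = 1, c_{n+3} = c_{n+2} + c_n. *)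
Fixpoint cows (n : nat) : nat :=
  match n with
  | 0 => 1
  | n1.+1 =>
    match n1 with
    | 0 => 1
    | n2.+1 =>
      match n2 with
      | 0 => 1
      | m.+1 => cows n1 + cows m
      end
    end
  end.

(* Padovan numbers: p_n = [n=0] + p_{n-2} + p_{n-3}, p_n = 0 for n<0.
   Unfolded: p_0 = 1, p_1 = 0, p_2 = p_0 = 1, p_{n+3} = p_{n+1} + p_n. *)
Fixpoint padovan (n : nat) : nat :=
  match n with
  | 0 => 1
  | n1.+1 =>
    match n1 with
    | 0 => 0
    | n2.+1 =>
      match n2 with
      | 0 => 1
      | m.+1 => padovan n2 + padovan m
      end
    end
  end.

Example cows_test : map cows (iota 0 10) = [:: 1;1;1;2;3;4;6;9;13;19]. Proof. by []. Qed.
Example padovan_test : map padovan (iota 0 10) = [:: 1;0;1;1;1;2;2;3;4;5]. Proof. by []. Qed.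
Lemma cows_rec n : cows n = (n == 0) + (if n is m.+1 then cows m else 0)
   + (if n is m.+3 then cows m else 0).
Proof. by case: n => [|[|[|n]]] //=; rewrite addn0. Qed.
Lemma padovan_rec n : padovan n = (n == 0) + (if n is m.+2 then padovan m else 0)
   + (if n is m.+3 then padovan m else 0).
Proof. by case: n => [|[|[|n]]]. Qed.

(* Main.v *)
Require Import Defs.
From mathcomp Require Import all_boot.
From mathcomp Require Import zify.

Definition conv (f g : nat -> nat) m := \sum_(i < m.+1) f i * g (m - i).

Lemma conv_shift f g m : conv f g m.+1 = f 0 * g m.+1 + conv (fun i => f i.+1) g m.
Proof.
rewrite /conv big_ord_recl /= subn0; congr (_ + _).
Qed.

Lemma conv_add f1 f2 g m :
  conv (fun i => f1 i + f2 i) g m = conv f1 g m + conv f2 g m.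
Proof. by rewrite /conv -big_split; apply: eq_bigr => i _; rewrite mulnDl. Qed.

Lemma conv0 f g : conv f g 0 = f 0 * g 0.
Proof. by rewrite /conv big_ord_recl big_ord0 addn0. Qed.

Lemma cowsS m : cows m.+3 = cows m.+2 + cows m. Proof. by []. Qed.
Lemma padS m : padovan m.+3 = padovan m.+1 + padovan m. Proof. by []. Qed.

Lemma pad012 : (padovan 0 = 1) * (padovan 1 = 0) * (padovan 2 = 1). Proof. by []. Qed.
Lemma cows012 : (cows 0 = 1) * (cows 1 = 1) * (cows 2 = 1). Proof. by []. Qed.
Arguments cows : simpl never.
Arguments padovan : simpl never.

Definition dd i := cows i ^ 2.

Lemma convB m : conv padovan dd m = cows m * cows m.+1.
Proof.
elim/ltn_ind: m => -[|[|[|m]]] IH.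
- by rewrite conv0.
- by rewrite conv_shift conv0.
- by rewrite !conv_shift conv0.
have E1 := IH m.+1 ltac:(lia).
have E0 := IH m ltac:(lia).
rewrite !conv_shift /= ?pad012 ?cows012.
have -> : conv (fun i => padovan i.+3) dd m =
          conv (fun i => padovan i.+1 + padovan i) dd m by [].
rewrite conv_add E0.
move: E1; rewrite conv_shift /= ?pad012 => E1.
rewrite !cowsS /dd in E1 *.
move: E1 (cowsS m.+1) (cowsS m).
set Y := conv _ _ m.
move=> E1 _ _.
rewrite ?cowsS; nia.
Qed.

Lemma convP2 m : conv (fun i => padovan i.+2) dd m = cows m.+2 * cows m.
Proof.
have := convB m.+2; rewrite !conv_shift /= ?pad012 cowsS /dd; nia.
Qed.

Definition gg j := cows j.+2 * cows j.

Lemma convX N : cows N.+3 ^ 2 = cows N.+3 + 2 * conv cows gg N.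
Proof.
elim/ltn_ind: N => -[|[|[|N]]] IH.
- by rewrite conv0.
- by rewrite conv_shift conv0.
- by rewrite !conv_shift conv0.
have E2 := IH N.+2 ltac:(lia).
have E0 := IH N ltac:(lia).
rewrite !conv_shift /= ?pad012 ?cows012.
have -> : conv (fun i => cows i.+3) gg N =
          conv (fun i => cows i.+2 + cows i) gg N by [].
rewrite conv_add.
move: E2; rewrite !conv_shift /= ?cows012 => E2.
rewrite (cowsS N.+3) /gg in E2 E0 *.
set Z := conv _ _ N in E2 *.
set X := conv _ _ N in E0 *.
nia.
Qed.

Theorem mainTheorem16 (n : nat) :
  cows n ^ 2 =
  cows n + 2 * \sum_(0 <= k < n - 2) \sum_(3 <= r < (n - k).+1)
                 padovan (r - 1) * cows k * cows (n - k - r) ^ 2.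
Proof.
case: n => [|[|[|N]]]; try by rewrite big_geq.
rewrite convX; congr (_ + 2 * _).
rewrite /conv (_ : N.+3 - 2 = N.+1) ?big_mkord; last by lia.
apply: eq_bigr => -[k /= Hk] _.
have -> : N.+3 - k = (N - k).+3 by lia.
rewrite /gg -convP2 /conv big_distrr /=.
rewrite -{1}[3]/(0 + 3) big_addn (_ : (N - k).+4 - 3 = (N - k).+1) ?big_mkord; last by lia.
apply: eq_bigr => -[i /= Hi] _.
have -> : i + 3 - 1 = i.+2 by lia.
have -> : (N - k).+3 - (i + 3) = N - k - i by lia.
by rewrite /dd mulnA [cows k * _]mulnC.
Qed.
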